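(* There exist a separable Hilbert space $\mathcal{H}$, a finite collection $\mathcal{A}=\{A_1,\dots,A_K\}$ of self-adjoint operators, a nonnegative lower semicontinuous cost $c:\mathbb{R}^K\times\mathbb{R}^K\to[0,\infty)$, and states $\rho,\omega\in\mathcal{S}(\mathcal{H})$ such that $$\inf\Big\{\mathrm{tr}\big[\Gamma C_c^{(\mathcal{A})}\big]\ \Big|\ \Gamma\in\mathcal{S}\big((\mathcal{H}\otimes\mathcal{H}^* )^{\otimes K}\big),\ (\Gamma)_{2k-1}=\omega,\ (\Gamma)_{2k}=\rho^T\ \forall k\Big\}<\inf\Big\{\mathrm{tr}\big[\Pi^{\otimes K}C_c^{(\mathcal{A})}\big]\ \Big|\ \Pi\in\mathcal{C}(\rho,\omega)\Big\}.$$
   Context: $\mathcal{H}^*$ is the dual of $\mathcal{H}$; $A^T$ is the operator on $\mathcal{H}^*$ with $(A^T\eta)(\varphi)=\eta(A\varphi)$. $\mathcal{S}(\mathcal{K})$ is the set of states on $\mathcal{K}$. $\mathcal{C}(\rho,\omega)=\{\Pi\in\mathcal{S}(\mathcal{H}\otimes\mathcal{H}^* ):\mathrm{tr}_{\mathcal{H}^*}[\Pi]=\omega,\ \mathrm{tr}_{\mathcal{H}}[\Pi]=\rho^T\}$. With $E_k$ the spectral measure of $A_k$, $C_c^{(\mathcal{A})}=\iint c(x_1,\dots,x_K,y_1,\dots,y_K)\,dE_1(y_1)\otimes dE_1^T(x_1)\otimes\cdots\otimes dE_K(y_K)\otimes dE_K^T(x_K)$ on $(\mathcal{H}\otimes\mathcal{H}^*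 )^{\otimes K}$, where $\Pi^{\otimes K}$ is viewed as an operator on $(\mathcal{H}\otimes\mathcal{H}^* )^{\otimes K}$. Numbering the $2K$ tensor factors $1,\dots,2K$, $(\Gamma)_{2k-1}$ (resp. $(\Gamma)_{2k}$) is the partial trace of $\Gamma$ over all factors except the $(2k-1)$-th (resp. $2k$-th). *)

(* Defs.v *)
From HB Require Import structures.
From mathcomp Require Import all_boot all_order all_algebra.
From mathcomp Require Import all_classical all_reals all_analysis.
From mathcomp Require Import complex.
Set Implicit Arguments. Unset Strict Implicit. Unset Printing Implicit Defensive.
Import Order.TTheory GRing.Theory Num.Theory.
Import numFieldNormedType.Exports.
Local Open Scope ring_scope.

(* Finite-dimensional model: H = C^n with orthonormal basis indexed by 'I_n;
   the dual H^* is identified with C^n via the dual basis.  An operator on a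
   finite-dimensional Hilbert space with orthonormal basis indexed by the
   finType T is given by its matrix entries  M i j = <e_i, M e_j>. *)
Definition Op (R : realType) (T : finType) := T -> T -> R[i].

Section QOT.
Variable R : realType.
Local Notation C := R[i].

Definition opmul (T : finType) (M N : Op R T) : Op R T :=
  fun i j => \sum_(l : T) M i l * N l j.

Definition optrace (T : finType) (M : Op R T) : C := \sum_(i : T) M i i.

Definition optr (T : finType) (M : Op R T) : Op R T := fun i j => M j i.

Definition selfadjoint (T : finType) (M : Op R T) : Prop :=
  forall i j, M j i = conjc (M i j).

Definition psd (T : finType) (M : Op R T) : Prop :=
  forall v : T -> C, 0 <= \sum_(i : T) \sum_(j : T) conjc (v i) * M i j * v j.

Definition is_state (T : finType) (M : Op R T) : Prop :=
  psd M /\ optrace M = 1.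

(* Spectral measure of a self-adjoint A on C^n, given as a projection-valued
   measure  E(B) = \sum_(j | lam j \in B) P j  with P j mutually orthogonal
   orthogonal projections summing to the identity and A = \int x dE(x). *)
Definition spectral_resolution (n : nat) (A : Op R 'I_n)
  (lam : 'I_n -> R) (P : 'I_n -> Op R 'I_n) : Prop :=
  [/\ forall j, selfadjoint (P j),
      forall j, opmul (P j) (P j) = P j,
      forall j j', j != j' -> opmul (P j) (P j') = (fun _ _ => 0),
      (fun a b => \sum_(j : 'I_n) P j a b) = (fun a b => (a == b)%:R)
    & A = (fun a b => \sum_(j : 'I_n) ((lam j)%:C)%C * P j a b)].

(* basis index of (H (x) H^* )^{(x) K}: for each k, the pair
   (index in the (2k-1)-th factor H, index in the 2k-th factor H^* ) *)
Definition idx (n K : nat) := {ffun 'I_K -> 'I_n * 'I_n}.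

Definition upd (n K : nat) (i : idx n K) (k : 'I_K) (p : 'I_n * 'I_n) : idx n K :=
  [ffun l => if l == k then p else i l].

(* (Gamma)_{2k-1}: partial trace over all factors but the (2k-1)-th (a copy of H) *)
Definition marg_odd (n K : nat) (G : Op R (idx n K)) (k : 'I_K) : Op R 'I_n :=
  fun a b => \sum_(i : idx n K | (i k).1 == a) G i (upd i k (b, (i k).2)).

(* (Gamma)_{2k}: partial trace over all factors but the 2k-th (a copy of H^* ) *)
Definition marg_even (n K : nat) (G : Op R (idx n K)) (k : 'I_K) : Op R 'I_n :=
  fun x x' => \sum_(i : idx n K | (i k).2 == x) G i (upd i k ((i k).1, x')).

Definition ptr_dual (n : nat) (Pi : Op R ('I_n * 'I_n)%type) : Op R 'I_n :=
  fun a b => \sum_(x : 'I_n) Pi (a, x) (b, x).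
Definition ptr_H (n : nat) (Pi : Op R ('I_n * 'I_n)%type) : Op R 'I_n :=
  fun x x' => \sum_(a : 'I_n) Pi (a, x) (a, x').

Definition couplings (n : nat) (rho omega : Op R 'I_n) : set (Op R ('I_n * 'I_n)%type) :=
  [set Pi | is_state Pi /\ ptr_dual Pi = omega /\ ptr_H Pi = optr rho].

Definition tenspow (n K : nat) (Pi : Op R ('I_n * 'I_n)%type) : Op R (idx n K) :=
  fun i j => \prod_(k : 'I_K) Pi (i k) (j k).

(* C_c^{(A)} = \int c(x_1..x_K, y_1..y_K)
      dE_1(y_1) (x) dE_1^T(x_1) (x) ... (x) dE_K(y_K) (x) dE_K^T(x_K),
   with E_k the spectral measure described by (lam k, P k). *)
Definition Ccost (n K : nat) (lam : 'I_K -> 'I_n -> R) (P : 'I_K -> 'I_n -> Op R 'I_n)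
  (c : 'rV[R]_K * 'rV[R]_K -> R) : Op R (idx n K) :=
  fun i j => \sum_(a : {ffun 'I_K -> 'I_n}) \sum_(b : {ffun 'I_K -> 'I_n})
     ((c (\row_k lam k (b k), \row_k lam k (a k)))%:C)%C *
     \prod_(k : 'I_K) (P k (a k) (i k).1 (j k).1 * optr (P k (b k)) (i k).2 (j k).2).

Definition value_free (n K : nat) (rho omega : Op R 'I_n) (Cc : Op R (idx n K)) : R :=
  inf [set t : R | exists G : Op R (idx n K),
        [/\ is_state G, forall k, marg_odd G k = omega,
            forall k, marg_even G k = optr rho
          & t = complex.Re (optrace (opmul G Cc))]].

Definition value_prod (n K : nat) (rho omega : Op R 'I_n) (Cc : Op R (idx n K)) : R :=
  inf [set t : R | exists Pi, couplings rho omega Pi /\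
        t = complex.Re (optrace (opmul (@tenspow n K Pi) Cc))].

End QOT.

(* Main.v *)
Require Import Defs.
From HB Require Import structures.
From mathcomp Require Import all_boot all_order all_algebra.
From mathcomp Require Import all_classical all_reals all_analysis.
From mathcomp Require Import complex.
From mathcomp Require Import ring lra.
Import Order.TTheory GRing.Theory Num.Theory.
Import numFieldNormedType.Exports.
Local Open Scope ring_scope.

Set Implicit Arguments. Unset Strict Implicit. Unset Printing Implicit Defensive.
Local Open Scope classical_set_scope.
Section S.
Variable R : realType.
Local Notation C := R[i].

Lemma sum2 (V : nmodType) (F : 'I_2 -> V) : \sum_(x < 2) F x = F ord0 + F ord_max.
Proof. rewrite !big_ord_recl big_ord0 addr0; congr (_ + F _); exact: val_inj. Qed.

Lemma I2 (k : 'I_2) : k = ord0 \/ k = ord_max.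
Proof. case: k => [[|[|k]] Hk]; [left|right|by []]; exact: val_inj. Qed.

Lemma sumP2 (V : nmodType) (F : ('I_2 * 'I_2)%type -> V) : \sum_p F p =
  F (ord0, ord0) + F (ord0, ord_max) + F (ord_max, ord0) + F (ord_max, ord_max).
Proof.
transitivity (\sum_(p : ('I_2 * 'I_2)%type) F (p.1, p.2)); first by apply: eq_bigr => -[].
by rewrite -(pair_bigA _ (fun x y => F (x, y))) /= !sum2 !addrA.
Qed.

Definition mk2 (T : Type) (x y : T) : {ffun 'I_2 -> T} :=
  [ffun k => if k == ord0 then x else y].

Lemma sum_ffun2 (T : finType) (V : nmodType) (F : {ffun 'I_2 -> T} -> V) :
  \sum_f F f = \sum_x \sum_y F (mk2 x y).
Proof.
rewrite pair_bigA /= (reindex (fun p : (T * T)%type => mk2 p.1 p.2)) //=.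
exists (fun f => (f ord0, f ord_max)) => [p _|f _] /=; first by case: p => x y; rewrite /mk2 !ffunE.
apply/ffunP => k; rewrite /mk2 ffunE; by case: (I2 k) => ->.
Qed.

Definition diagop (T : finType) (d : T -> C) : Op R T := fun i j => (i == j)%:R * d i.

Lemma psd_diag (T : finType) (d : T -> C) : (forall i, 0 <= d i) -> psd (diagop d).
Proof.
move=> d0 v; apply: sumr_ge0 => i _.
rewrite (bigD1 i) //= big1 => [|j /negbTE ji]; last by rewrite /diagop eq_sym ji mul0r mulr0 mul0r.
rewrite addr0 /diagop eqxx mul1r mulrAC; apply: mulr_ge0 => //.
rewrite mulrC; exact: mul_conjC_ge0.
Qed.

Lemma trace_diag (T : finType) (d : T -> C) : optrace (diagop d) = \sum_i d i.
Proof. by apply: eq_bigr => i _; rewrite /diagop eqxx mul1r. Qed.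

Lemma trace_mul_diag (T : finType) (M : Op R T) (h : T -> C) :
  optrace (opmul M (diagop h)) = \sum_i M i i * h i.
Proof.
apply: eq_bigr => i _; rewrite /opmul (bigD1 i) //= big1 ?addr0 => [|l li].
  by rewrite /diagop eqxx mul1r.
by rewrite /diagop (negbTE li) mul0r mulr0.
Qed.

Lemma ffun_neq (I T : finType) (f g : {ffun I -> T}) : f != g -> exists k, f k != g k.
Proof.
move=> fg; apply/existsP; rewrite -negb_forall; apply/negP => /forallP h.
by move/negP: fg; apply; apply/eqP/ffunP => k; exact/eqP/h.
Qed.

Definition Pd (n : nat) (j : 'I_n) : Op R 'I_n := fun a b => ((a == j) && (b == j))%:R.

Lemma Ccost_diag (n K : nat) (lam : 'I_K -> 'I_n -> R) c :
  Ccost lam (fun _ => @Pd n) c =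
  diagop (fun i : idx n K => ((c (\row_k lam k (i k).2, \row_k lam k (i k).1))%:C)%C).
Proof.
apply/funext => i; apply/funext => j; rewrite /Ccost /diagop /=.
rewrite (bigD1 [ffun k => (i k).1]) //= [X in _ + X]big1 => [|a ai]; last first.
  have [k] := ffun_neq ai; rewrite ffunE => ak.
  apply: big1 => b _; rewrite (bigD1 k) //= /Pd [((i k).1 == a k)]eq_sym (negbTE ak) /=.
  by rewrite !mul0r mulr0.
rewrite addr0 (bigD1 [ffun k => (i k).2]) //= [X in _ + X]big1 => [|b bi]; last first.
  have [k] := ffun_neq bi; rewrite ffunE => bk.
  rewrite (bigD1 k) //= /optr /Pd [((i k).2 == b k)]eq_sym (negbTE bk) /=.
  by rewrite andbF /= ?mulr0n !(mulr0, mul0r).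
rewrite addr0.
have -> : \row_k lam k ([ffun k => (i k).2] k) = \row_k lam k (i k).2.
  by apply/rowP => k; rewrite !mxE ffunE.
have -> : \row_k lam k ([ffun k => (i k).1] k) = \row_k lam k (i k).1.
  by apply/rowP => k; rewrite !mxE ffunE.
case: (eqVneq i j) => [<-|ij].
  rewrite big1 ?mulr1 ?eqxx ?mul1r // => k _.
  by rewrite /optr /Pd !ffunE !eqxx mulr1.
have [k ik] := ffun_neq ij.
rewrite (bigD1 k) //= /optr /Pd !ffunE !eqxx /= mul0r.
move: ik; case: (i k) => a1 a2; case: (j k) => b1 b2.
rewrite xpair_eqE negb_and => /orP[] /negbTE h.
  by rewrite /= andbT eq_sym h ?mulr0n !(mulr0, mul0r).
by rewrite /= andbT [b2 == _]eq_sym h ?mulr0n !(mulr0, mul0r).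
Qed.


Lemma upd_eq n K (i : idx n K) k p : (i == upd i k p) = (i k == p).
Proof.
apply/eqP/eqP => [->|<-]; first by rewrite /upd ffunE eqxx.
by apply/ffunP => l; rewrite /upd ffunE; case: eqP => // ->.
Qed.

Lemma marg_odd_diag n K (g : idx n K -> C) k a b :
  marg_odd (diagop g) k a b = (a == b)%:R * \sum_(i : idx n K | (i k).1 == a) g i.
Proof.
rewrite /marg_odd big_distrr /=; apply: eq_bigr => i /eqP ia.
rewrite /diagop upd_eq -ia; case: (i k) => x y /=.
by rewrite xpair_eqE eqxx andbT.
Qed.

Lemma marg_even_diag n K (g : idx n K -> C) k x x' :
  marg_even (diagop g) k x x' = (x == x')%:R * \sum_(i : idx n K | (i k).2 == x) g i.
Proof.
rewrite /marg_even big_distrr /=; apply: eq_bigr => i /eqP ia.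
rewrite /diagop upd_eq -ia; case: (i k) => a y /=.
by rewrite xpair_eqE eqxx.
Qed.

Definition h : C := (((2 : R)^-1)%:C)%C.
Lemma hh : h + h = 1.
Proof. rewrite /h -rmorphD -(rmorph1 (real_complex R)); congr (real_complex R _); lra. Qed.
Lemma h_ge0 : 0 <= h.
Proof. by rewrite lecE /= eqxx /= invr_ge0 ler0n. Qed.

Definition rho0 : Op R 'I_2 := diagop (fun _ => h).
Definition omega0 : Op R 'I_2 := diagop (fun a : 'I_2 => (a == ord0)%:R).
Definition Pi0 : Op R ('I_2 * 'I_2)%type :=
  diagop (fun p : ('I_2 * 'I_2)%type => (p.1 == ord0)%:R * h).
Definition g0 (i : idx 2 2) : C :=
  if [&& (i ord0).1 == ord0, (i ord_max).1 == ord0 & (i ord0).2 == (i ord_max).2]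
  then h else 0.
Definition lam0 (k : 'I_2) (j : 'I_2) : R := (j : nat)%:R.
Definition P0 (k : 'I_2) := @Pd 2.
Definition A0 (k : 'I_2) : Op R 'I_2 :=
  fun a b => \sum_(j : 'I_2) ((lam0 k j)%:C)%C * P0 k j a b.
Definition c0 (z : ('rV[R]_2 * 'rV[R]_2)%type) : R :=
  (z.1 ord0 ord0 - z.1 ord0 ord_max) * (z.1 ord0 ord0 - z.1 ord0 ord_max).

Lemma rho0_state : is_state rho0.
Proof.
split; first by apply: psd_diag => _; exact: h_ge0.
by rewrite trace_diag sum2 hh.
Qed.

Lemma omega0_state : is_state omega0.
Proof.
split; first by apply: psd_diag => a; rewrite ler0n.
by rewrite trace_diag sum2 /= addr0.
Qed.


Ltac simp := rewrite /= ?mulr1n ?mulr0n ?(mul1r, mulr1, mul0r, mulr0, addr0, add0r).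

Lemma spec0 k : spectral_resolution (A0 k) (lam0 k) (P0 k).
Proof.
split.
- by move=> j a b; rewrite /P0 /Pd conjc_nat andbC.
- move=> j; apply/funext => a; apply/funext => b; rewrite /opmul /P0 /Pd sum2.
  by case: (I2 a) => ->; case: (I2 b) => ->; case: (I2 j) => ->; simp.
- move=> j j' jj'; apply/funext => a; apply/funext => b; rewrite /opmul /P0 /Pd sum2.
  by move: jj'; case: (I2 j) => ->; case: (I2 j') => -> //= _; case: (I2 a) => ->; case: (I2 b) => ->; simp.
- apply/funext => a; apply/funext => b; rewrite /P0 /Pd sum2.
  by case: (I2 a) => ->; case: (I2 b) => ->; simp.
- by [].
Qed.

Lemma sa0 k : selfadjoint (A0 k).
Proof.
move=> a b; rewrite /A0 /P0 /Pd /lam0 !sum2 !rmorph_nat !rmorphD !rmorphM !rmorph_nat.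
by case: (I2 a) => ->; case: (I2 b) => ->; simp.
Qed.


Lemma lsc0 : lower_semicontinuous (fun z : ('rV[R]_2 * 'rV[R]_2)%type => (c0 z)%:E).
Proof.
apply/lower_semicontinuousP => a.
have -> : [set x | (a%:E < (c0 x)%:E)%E] = c0 @^-1` [set x | a < x].
  by apply/seteqP; split => z /=; rewrite lte_fin.
apply: open_comp; last exact: open_gt.
move=> z _.
have hp (m : 'I_2) : continuous (fun z : ('rV[R]_2 * 'rV[R]_2)%type => z.1 ord0 m).
  move=> w; apply: (@continuous_comp _ _ _ fst (fun M : 'rV[R]_2 => M ord0 m)).
    exact: cvg_fst.
  exact: coord_continuous.
apply: cvgM; apply: cvgB; exact: hp.
Qed.

Lemma G0_state : is_state (diagop g0).
Proof.
split; first by apply: psd_diag => i; rewrite /g0; case: ifP => _ //; exact: h_ge0.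
rewrite trace_diag sum_ffun2 !sumP2 /g0 /mk2 !ffunE; simp.
exact: hh.
Qed.

Lemma G0_odd k : marg_odd (diagop g0) k = omega0.
Proof.
apply/funext => a; apply/funext => b; rewrite marg_odd_diag /omega0 /diagop.
congr (_ * _).
rewrite big_mkcond sum_ffun2 !sumP2 /g0 /mk2 !ffunE.
by case: (I2 k) => ->; case: (I2 a) => ->; simp; rewrite ?hh.
Qed.

Lemma G0_even k : marg_even (diagop g0) k = optr rho0.
Proof.
apply/funext => a; apply/funext => b; rewrite marg_even_diag /optr /rho0 /diagop eq_sym.
congr (_ * _).
rewrite big_mkcond sum_ffun2 !sumP2 /g0 /mk2 !ffunE.
by case: (I2 k) => ->; case: (I2 a) => ->; simp; rewrite ?hh.
Qed.

Lemma Pi0_coupling : couplings rho0 omega0 Pi0.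
Proof.
split; [split|split].
- by apply: psd_diag => p; apply: mulr_ge0; [rewrite ler0n|exact: h_ge0].
- by rewrite trace_diag sumP2; simp; rewrite ?hh.
- apply/funext => a; apply/funext => b; rewrite /ptr_dual /Pi0 /omega0 /diagop sum2.
  by case: (I2 a) => ->; case: (I2 b) => ->; simp; rewrite ?hh.
- apply/funext => a; apply/funext => b; rewrite /ptr_H /Pi0 /optr /rho0 /diagop sum2.
  by case: (I2 a) => ->; case: (I2 b) => ->; simp.
Qed.


Lemma cvR (x y : 'I_2) :
  (((x : nat)%:R - (y : nat)%:R) * ((x : nat)%:R - (y : nat)%:R) : R) = (x != y)%:R.
Proof. by case: (I2 x) => ->; case: (I2 y) => ->; simp; ring. Qed.

Lemma value_free0 :
  complex.Re (optrace (opmul (diagop g0) (Ccost lam0 P0 c0))) = 0.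
Proof.
rewrite /P0 Ccost_diag trace_mul_diag big1 // => i _.
rewrite /diagop eqxx mul1r /g0; case: ifP => [/and3P[_ _ /eqP e]|_]; last by rewrite mul0r.
by rewrite /c0 !mxE /lam0 e subrr mul0r rmorph0 mulr0.
Qed.

Lemma value_prod0 Pi : couplings rho0 omega0 Pi ->
  optrace (opmul (@tenspow R 2 2 Pi) (Ccost lam0 P0 c0)) = h.
Proof.
move=> [[_ tr1] [_ HH]].
have Hd y : \sum_a Pi (a, y) (a, y) = h.
  by have := congr1 (fun M => M y y) HH; rewrite /ptr_H /optr /rho0 /diagop eqxx mul1r.
have inner (p : ('I_2 * 'I_2)%type) : \sum_q Pi q q * (p.2 != q.2)%:R = h.
  transitivity (\sum_b \sum_y Pi (b, y) (b, y) * (p.2 != y)%:R).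
    by rewrite pair_bigA; apply: eq_bigr => -[].
  rewrite exchange_big /=.
  under eq_bigr => y _ do rewrite -big_distrl /= Hd.
  by rewrite sum2; case: p => a x /=; case: (I2 x) => ->; simp.
rewrite /P0 Ccost_diag trace_mul_diag sum_ffun2.
transitivity (\sum_p \sum_q Pi p p * (Pi q q * (p.2 != q.2)%:R)).
  apply: eq_bigr => p _; apply: eq_bigr => q _.
  rewrite /tenspow big_ord_recl big_ord1 /mk2 !ffunE /= /c0 !mxE !ffunE /= cvR rmorph_nat.
  by rewrite mulrA.
under eq_bigr => p _ do rewrite -big_distrr /= inner.
by rewrite -big_distrl /= -/(optrace Pi) tr1 mul1r.
Qed.

End S.

Theorem proposition2p6 (R : realType) :
  exists (n K : nat) (A : 'I_K -> Op R 'I_n) (c : ('rV[R]_K * 'rV[R]_K)%type -> R)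
         (rho omega : Op R 'I_n),
    (0 < n)%N /\
    (forall k, selfadjoint (A k)) /\
    (forall z, 0 <= c z) /\
    lower_semicontinuous (fun z : ('rV[R]_K * 'rV[R]_K)%type => (c z)%:E) /\
    is_state rho /\ is_state omega /\
    exists (lam : 'I_K -> 'I_n -> R) (P : 'I_K -> 'I_n -> Op R 'I_n),
      (forall k, spectral_resolution (A k) (lam k) (P k)) /\
      value_free rho omega (Ccost lam P c) < value_prod rho omega (Ccost lam P c).
Proof.
exists 2%N, 2%N, (@A0 R), (@c0 R), (@rho0 R), (@omega0 R).
split; first by [].
split; first exact: sa0.
split; first by move=> z; rewrite /c0 -expr2; exact: sqr_ge0.
split; first exact: lsc0.
split; first exact: rho0_state.
split; first exact: omega0_state.
exists (@lam0 R), (@P0 R); split; first exact: spec0.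
have Hfree : value_free (@rho0 R) (@omega0 R) (Ccost (@lam0 R) (@P0 R) (@c0 R)) <= 0.
  rewrite /value_free; set E := [set t : R | _].
  have E0 : E 0.
    exists (diagop (@g0 R)); split; [exact: G0_state|exact: G0_odd|exact: G0_even|].
    by rewrite value_free0.
  case: (pselect (has_lbound E)) => hl; first exact: (ge_inf hl E0).
  by rewrite inf_out // => -[].
have Hprod : (2 : R)^-1 <= value_prod (@rho0 R) (@omega0 R) (Ccost (@lam0 R) (@P0 R) (@c0 R)).
  apply: lb_le_inf.
    exists (complex.Re (optrace (opmul (@tenspow R 2 2 (@Pi0 R)) (Ccost (@lam0 R) (@P0 R) (@c0 R))))).
    by exists (@Pi0 R); split => //; exact: Pi0_coupling.
  move=> t [Pi [HPi ->]].
  by rewrite value_prod0.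
apply: (le_lt_trans Hfree); apply: (lt_le_trans _ Hprod).
by rewrite invr_gt0 ltr0n.
Qed.
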